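(* Let $0<a_1<a_2<\cdots<a_n$ be task lengths and $A_{i:n}:=a_i+\cdots+a_n$. Let the disruption intensity be $\lambda(t)=\bar\lambda f(t)$ with $\bar\lambda>0$ and $f$ a positive differentiable function on $[0,\infty)$ with $f_-:=\inf_{t\ge0}f(t)>0$ and $f_+:=\sup_{t\ge0}f(t)<\infty$. Assume $\bar\lambda\le\frac{1}{2f_+a_n}$. Then for every $t\ge0$ and $i=1,\dots,n$, $$A_{i:n}\le M_{i:n}(t)\le A_{i:n}+\bar\lambda f_+(a_i^2+\cdots+a_n^2).$$ In particular, $M_{i:n}(t)\le\frac32A_{i:n}$.
   Context: Model: a single machine processes a finite batch of tasks one at a time in a fixed order. A task of length $c>0$ requires $c$ units of uninterrupted processing. Disruptions occur at the points of a non-homogeneous Poisson process on $[0,\infty)$ with intensity function $\lambda(t)$. If a disruption occurs while a task is being processed, all work on it is lost and that task is restarted from scratch at the disruption time (no repair time); a task is completed once it has been processed for $c$ consecutive time units with no disruption, and the machine then immediately starts the next task. $M_{i:n}(t)$ denotes the expected time, measured from $t$, to complete the tasks $a_i,a_{i+1},\dots,a_n$ in this order when processing of $a_i$ starts at time $t$. *)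

(* Defs.v *)
From HB Require Import structures.
From mathcomp Require Import all_boot all_order all_algebra.
From mathcomp Require Import all_classical all_reals all_analysis.
Set Implicit Arguments. Unset Strict Implicit. Unset Printing Implicit Defensive.
Import Order.TTheory GRing.Theory Num.Theory.
Import numFieldNormedType.Exports.
Local Open Scope classical_set_scope.
Local Open Scope ring_scope.

Definition pois_pmf {R : realType} (r : R) (k : nat) : R :=
  expR (- r) * r ^+ k / (k`!)%:R.

Definition cumint {R : realType} (lam : R -> R) (a b : R) : R :=
  Rintegral lebesgue_measure `[a, b] lam.

Definition count_eq {R : realType} (D : set R) (a b : R) (k : nat) : Prop :=
  exists s : seq R, [/\ uniq s, size s = k &
    forall x, x \in s <-> (D x /\ a <= x < b)].

(* D : T -> set R is (the set of points of) a non-homogeneous Poisson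
   process on [0, +oo) with intensity function lam, under P:
   all points lie in [0,+oo), and for any finitely many pairwise disjoint
   intervals [a_j, b_j) in [0,+oo) the counts N[a_j,b_j) are independent
   and Poisson distributed with means \int_{a_j}^{b_j} lam. *)
Definition is_NHPP {R : realType} {d : measure_display} {T : measurableType d}
    (P : probability T R) (D : T -> set R) (lam : R -> R) : Prop :=
  (forall w x, D w x -> 0 <= x) /\
  forall (m : nat) (a b : 'I_m -> R) (k : 'I_m -> nat),
    (forall j, 0 <= a j <= b j) ->
    (forall j l, j != l -> b j <= a l \/ b l <= a j) ->
    let E := \bigcap_(j in [set: 'I_m])
               [set w | count_eq (D w) (a j) (b j) (k j)] in
    measurable E /\
    P E = (\prod_(j < m) pois_pmf (cumint lam (a j) (b j)) (k j))%:E.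

(* Completion time (absolute) of a task of length c started at time s,
   given disruption set D (restart from scratch at every disruption):
   the first time u >= s + c such that no disruption lies in (u - c, u).
   +oo if there is no such time. *)
Definition task_end {R : realType} (D : set R) (c s : R) : \bar R :=
  ereal_inf [set u%:E | u in
    [set u : R | s + c <= u /\ forall x, D x -> ~ (u - c < x < u)]].

Definition seq_end {R : realType} (D : set R) (a : nat -> R) (i n : nat)
    (t : R) : \bar R :=
  foldl (fun x j => if x is EFin s then task_end D (a j) s else x)
        t%:E (iota i (n.+1 - i)).

Definition Mexp {R : realType} {d : measure_display} {T : measurableType d}
    (P : probability T R) (D : T -> set R) (a : nat -> R) (i n : nat)
    (t : R) : \bar R :=
  (\int[P]_w (seq_end (D w) a i n t - t%:E))%E.

(* Main.v *)
Require Import Defs.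
From HB Require Import structures.
From mathcomp Require Import all_boot all_order all_algebra.
From mathcomp Require Import all_classical all_reals all_analysis.
From mathcomp Require Import ring lra measurable_realfun.
Import Order.TTheory GRing.Theory Num.Theory.
Import numFieldNormedType.Exports.
Local Open Scope classical_set_scope.
Local Open Scope ring_scope.
Section Discrete.
Variable R : realType.
Variable mf : nat -> nat.

Definition nxt (st : seq nat * nat) (b : bool) : seq nat * nat :=
  match st.1 with
  | [::] => ([::], 0%N)
  | j :: js => if b then (j :: js, 0%N)
               else if (mf j <= st.2.+1)%N then (js, 0%N) else (j :: js, st.2.+1)
  end.

Fixpoint Vf (e : nat -> R) (H o : nat) (st : seq nat * nat) : R :=
  match H with
  | 0%N => 0
  | H'.+1 => if st.1 is [::] then 0 else
      1 + e o * Vf e H' o.+1 (nxt st false) + (1 - e o) * Vf e H' o.+1 (nxt st true)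
  end.

Definition gf (u : R) (m r : nat) : R := u * (u ^+ m - u ^+ r) / (u - 1).

Definition Phi (u : R) (st : seq nat * nat) : R :=
  match st.1 with
  | [::] => 0
  | j :: js => gf u (mf j) st.2 + \sum_(j' <- js) gf u (mf j') 0
  end.

Definition okst (st : seq nat * nat) : bool :=
  match st.1 with [::] => true | j :: _ => (st.2 < mf j)%N end.

Hypothesis mf_gt0 : forall j, (0 < mf j)%N.

Lemma okst_nxt st b : okst st -> okst (nxt st b).
Proof.
case: st => [[|j js] r] //=; rewrite /okst /nxt /=.
case: b => //= _; case: ifP => /= [_|]; last by rewrite leqNgt => /negbFE.
by case: js.
Qed.

Variable u : R.
Hypothesis u1 : 1 < u.

Lemma gf_ge0 m r : (r <= m)%N -> 0 <= gf u m r.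
Proof.
move=> rm; rewrite /gf; apply: divr_ge0; last by rewrite subr_ge0 ltW.
apply: mulr_ge0; first by apply: ltW; apply: lt_trans u1.
by rewrite subr_ge0 ler_eXn2l.
Qed.

Lemma Phi_ge0 st : okst st -> 0 <= Phi u st.
Proof.
case: st => [[|j js] r] //= ok; rewrite /Phi /=.
apply: addr_ge0; first by apply: gf_ge0; exact: ltnW.
by apply: sumr_ge0 => i _; apply: gf_ge0.
Qed.

Lemma gf_step (e : R) m r : 1 / u <= e <= 1 ->
  1 + e * gf u m r.+1 + (1 - e) * gf u m 0 <= gf u m r.
Proof.
move=> /andP[e1 e2]; have U1 := u1; rewrite /gf.
have u0 : 0 < u - 1 by lra.
set X := u ^+ m; set Y := u ^+ r.
have Y1 : 1 <= Y by rewrite /Y exprn_ege1 // ltW.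
rewrite exprS -/Y -subr_ge0.
have h : Y - 1 / u <= e * (u * Y - 1).
  have -> : Y - 1/u = 1/u * (u * Y - 1) by field; lra.
  by apply: ler_wpM2r => //; rewrite subr_ge0; nra.
have -> : u * (X - Y) / (u - 1) - (1 + e * (u * (X - u * Y) / (u - 1)) + (1 - e) * (u * (X - 1) / (u - 1)))
   = u / (u - 1) * (e * (u * Y - 1) - (Y - 1 / u)).
  by field; apply/andP; split; lra.
apply: mulr_ge0; first by apply: divr_ge0; lra.
by rewrite subr_ge0.
Qed.

Lemma Phi_nxt_false st : okst st -> st.1 != [::] ->
  Phi u (nxt st false) = 
  (if st.1 is j :: js then gf u (mf j) st.2.+1 + \sum_(j' <- js) gf u (mf j') 0 else 0).
Proof.
case: st => [[|j js] r] //= ok _; rewrite /okst /= in ok; rewrite /nxt /=.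
case: ifP => [le|] /=; last by rewrite /Phi.
have -> : mf j = r.+1 by apply/eqP; rewrite eqn_leq le ok.
rewrite /gf subrr mulr0 mul0r add0r /Phi /=.
by case: js => [|j' js] /=; rewrite ?big_nil ?big_cons.
Qed.

Lemma Vf_le_Phi (e : nat -> R) : (forall k, 1 / u <= e k <= 1) ->
  forall H o st, okst st -> Vf e H o st <= Phi u st.
Proof.
move=> he; have U1 := u1; elim=> [|H IH] o st ok /=; first exact: Phi_ge0.
case: st ok => [[|j js] r] ok //=.
have /andP[e1 e2] := he o.
have e0 : 0 <= e o by apply: le_trans e1; apply: divr_ge0; lra.
have := IH o.+1 _ (okst_nxt _ false ok).
have := IH o.+1 _ (okst_nxt _ true ok).
rewrite Phi_nxt_false //= /Phi /nxt /= => h1 h2.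
apply: (@le_trans _ _ (1 + e o * (gf u (mf j) r.+1 + \sum_(j' <- js) gf u (mf j') 0)
   + (1 - e o) * (gf u (mf j) 0 + \sum_(j' <- js) gf u (mf j') 0))).
  apply: lerD; first apply: lerD => //.
    by apply: ler_wpM2l.
  by apply: ler_wpM2l => //; rewrite subr_ge0.
have := gf_step _ (mf j) r (he o).
set S := \sum_(_ <- _) _. nra.
Qed.
End Discrete.

Section Random.
Variables (R : realType) (d : measure_display) (T : measurableType d).
Variable P : probability T R.
Variable mf : nat -> nat.
Variable E : nat -> set T.
Variable e : nat -> R.

Definition Cyl (S : seq nat) : set T := [set w | forall k, k \in S -> E k w].

Hypothesis hE : forall S : seq nat, uniq S ->
  measurable (Cyl S) /\ P (Cyl S) = (\prod_(k <- S) e k)%:E.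

Lemma mE k : measurable (E k).
Proof.
have [+ _] := hE [:: k] erefl.
by congr measurable; apply/seteqP; split => w /=; [move=> h; apply: h; rewrite inE|move=> h k'; rewrite inE => /eqP->].
Qed.

Fixpoint stp (H o : nat) (st : seq nat * nat) (w : T) : R :=
  match H with
  | 0%N => 0
  | H'.+1 => if st.1 is [::] then 0 else
      1 + \1_(E o) w * stp H' o.+1 (nxt mf st false) w
        + (1 - \1_(E o) w) * stp H' o.+1 (nxt mf st true) w
  end.

Lemma stpE H o st w : stp H.+1 o st w =
  if st.1 is [::] then 0 else
  1 + (if w \in E o then stp H o.+1 (nxt mf st false) w else stp H o.+1 (nxt mf st true) w).
Proof.
rewrite /= indicE; case: (w \in E o) => /=; case: st.1 => //= *.
  by rewrite subrr mul0r addr0 mul1r.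
by rewrite mul0r addr0 subr0 mul1r.
Qed.

Lemma stp_ge0 H o st w : 0 <= stp H o st w.
Proof.
elim: H o st => [|H IH] o st //; rewrite stpE; case: st.1 => // _ _.
by case: ifP => _; apply: addr_ge0.
Qed.

Lemma stp_nd H o st w : stp H o st w <= stp H.+1 o st w.
Proof.
elim: H o st => [|H IH] o st; first by rewrite stp_ge0.
rewrite stpE [in X in _ <= X]stpE; case: st.1 => // _ _.
by case: ifP => _; rewrite lerD2l.
Qed.

Lemma stp_meas H o st : measurable_fun setT (stp H o st).
Proof.
elim: H o st => [|H IH] o st /=; first exact: measurable_cst.
case: st.1 => [|_ _]; first exact: measurable_cst.
apply: measurable_funD; first apply: measurable_funD.
- exact: measurable_cst.
- apply: measurable_funM => //; exact: measurable_indic (mE o).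
- apply: measurable_funM => //; apply: measurable_funB; first exact: measurable_cst.
  exact: measurable_indic (mE o).
Qed.


Local Open Scope ereal_scope.

Lemma stp_measE H o st D : measurable_fun D (fun w => (stp H o st w)%:E).
Proof. by apply: measurable_funTS; apply/measurable_EFinP; exact: stp_meas. Qed.

Lemma intD1 C H o st : measurable C ->
  \int[P]_(w in C) (1 + stp H o st w)%:E = P C + \int[P]_(w in C) (stp H o st w)%:E.
Proof.
move=> mC.
under eq_integral do rewrite EFinD.
rewrite ge0_integralD //.
- by rewrite integral_cst // mul1e.
- by move=> *; rewrite lee_fin stp_ge0.
- exact: stp_measE.
Qed.

Lemma Cyl_cons o S : Cyl (o :: S) = Cyl S `&` E o.
Proof.
apply/seteqP; split => w /=.
  by move=> h; split; [move=> k kS; apply: h; rewrite inE kS orbT|apply: h; rewrite inE eqxx].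
by move=> [h1 h2] k; rewrite inE => /orP[/eqP->//|]; exact: h1.
Qed.

Lemma int_stp H o st S : uniq S -> (forall k, k \in S -> (k < o)%N) ->
  \int[P]_(w in Cyl S) (stp H o st w)%:E = ((\prod_(k <- S) e k) * @Vf R mf e H o st)%:E.
Proof.
elim: H o st S => [|H IH] o st S uS lS.
  by rewrite /= mulr0 integral0_eq.
have [mC PC] := hE _ uS.
have oS : o \notin S by apply/negP => /lS; rewrite ltnn.
have uoS : uniq (o :: S) by rewrite /= oS uS.
have [mC1 PC1] := hE _ uoS.
have loS : forall k, k \in o :: S -> (k < o.+1)%N.
  by move=> k; rewrite inE => /orP[/eqP->//|/lS /ltnW].
rewrite Cyl_cons in mC1 PC1.
have mC2 : measurable (Cyl S `\` E o) by apply: measurableD => //; exact: mE.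
have CU : Cyl S = (Cyl S `&` E o) `|` (Cyl S `\` E o).
  by apply/seteqP; split => w /=; [move=> h; case: (pselect (E o w)) => ?; [left|right]|case=> -[]].
have dis : [disjoint Cyl S `&` E o & Cyl S `\` E o].
  by rewrite disj_set2E; apply/eqP/seteqP; split => w // /= [[_ ?] [_ ?]].
have sU (F : T -> R) : measurable_fun setT F -> (forall w, (0 <= F w)%R) ->
    \int[P]_(w in Cyl S) (F w)%:E = \int[P]_(w in Cyl S `&` E o) (F w)%:E
      + \int[P]_(w in Cyl S `\` E o) (F w)%:E.
  move=> mF F0; rewrite [in LHS]CU ge0_integral_setU //.
  - by apply: measurable_funTS; exact/measurable_EFinP.
  - by move=> *; rewrite (_ : 0%E = 0%:E)// lee_fin.
case Hst : st.1 => [|j js].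
  by rewrite /= Hst mulr0 integral0_eq.
set Ff := stp H o.+1 (nxt mf st false).
set Ft := stp H o.+1 (nxt mf st true).
have e1 : \int[P]_(w in Cyl S `&` E o) (stp H.+1 o st w)%:E
    = \int[P]_(w in Cyl S `&` E o) (1 + Ff w)%:E.
  by apply: eq_integral => w; rewrite inE => -[_ Ew]; rewrite stpE Hst mem_set.
have e2 : \int[P]_(w in Cyl S `\` E o) (stp H.+1 o st w)%:E
    = \int[P]_(w in Cyl S `\` E o) (1 + Ft w)%:E.
  by apply: eq_integral => w; rewrite inE => -[_ Ew]; rewrite stpE Hst memNset.
have mS : forall H' o' st', measurable_fun setT (fun w => 1 + stp H' o' st' w)%R.
  by move=> *; apply: measurable_funD; [exact: measurable_cst|exact: stp_meas].
have pS : forall H' o' st' w, (0 <= 1 + stp H' o' st' w)%R.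
  by move=> *; apply: addr_ge0 => //; exact: stp_ge0.
rewrite sU; [|exact: stp_meas|exact: stp_ge0].
rewrite e1 e2.
have := sU _ (mS H o.+1 (nxt mf st true)) (pS H o.+1 (nxt mf st true)).
rewrite !intD1 //.
set X := (P (Cyl S `\` E o) + _).
have lS' : forall k, k \in S -> (k < o.+1)%N by move=> k /lS /ltnW.
rewrite PC PC1 -!Cyl_cons !IH // big_cons /= Hst.
set p := (\prod_(k <- S) e k)%R.
set vt := @Vf R mf e H o.+1 (nxt mf st true).
set vf := @Vf R mf e H o.+1 (nxt mf st false).
case: X => [x| |]; rewrite -?EFinD.
- move=> [hx]; congr EFin.
  have -> : x = (p + p * vt - (e o * p + e o * p * vt))%R by rewrite hx; ring.
  ring.
- by rewrite addey.
- by rewrite addeNy.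
Qed.

End Random.
Section Path.
Local Open Scope ereal_scope.
Variable R : realType.
Variable Dw : set R.
Variable a : nat -> R.

Lemma task_end_ge c s : (s + c)%:E <= task_end Dw c s.
Proof. by apply/ereal_infP => _ [u [hu _] <-]; rewrite lee_fin. Qed.

Lemma task_end_le c s e0 : (s <= e0)%R ->
  (forall x, Dw x -> ~ (e0 < x < e0 + c)%R) -> task_end Dw c s <= (e0 + c)%:E.
Proof.
move=> se hD; apply: ge_ereal_inf; exists (e0 + c)%R%:E => //.
exists (e0 + c)%R => //; split; first by rewrite lerD2r.
by move=> x /hD; rewrite addrK.
Qed.

Definition G (x : \bar R) (L : seq nat) : \bar R :=
  foldl (fun x j => if x is EFin s then task_end Dw (a j) s else x) x L.

Lemma G_y L : G +oo L = +oo.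
Proof. by elim: L. Qed.
Lemma G_Ny L : G -oo L = -oo.
Proof. by elim: L. Qed.

Lemma G_ge L y x : y%:E <= x -> (y + \sum_(j <- L) a j)%:E <= G x L.
Proof.
elim: L y x => [|j L IH] y x yx; first by rewrite big_nil addr0.
case: x yx => [s| |] yx /=; last by [].
  rewrite big_cons addrA; apply: IH.
  by apply: le_trans (task_end_ge _ _); rewrite lee_fin lerD2r.
by rewrite G_y leey.
Qed.

End Path.

Section PathStp.
Variables (R : realType) (d : measure_display) (T : measurableType d).
Variable mf : nat -> nat.
Variable E : nat -> set T.
Variable a : nat -> R.
Variables (t dl : R) (w : T) (Dw : set R).
Hypothesis dl0 : 0 < dl.
Hypothesis mf0 : forall j, (0 < mf j)%N.
Hypothesis mfa : forall j, a j <= (mf j)%:R * dl.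
Hypothesis hEw : forall k, w \in E k -> forall y, Dw y ->
  ~ (t + k%:R * dl <= y < t + k.+1%:R * dl).

Lemma cell_of y lo hi : lo%:R * dl <= y - t -> y - t < hi.+1%:R * dl ->
  exists2 k, (lo <= k <= hi)%N & t + k%:R * dl <= y < t + k.+1%:R * dl.
Proof.
move=> h1 h2; have dl0' := dl0.
have q1 : 0 <= y - t by apply: le_trans h1; apply: mulr_ge0; [exact: ler0n| exact: ltW].
have q0 : 0 <= (y - t) / dl by apply: divr_ge0 => //; exact: ltW.
exists (Num.truncn ((y - t) / dl)).
  apply/andP; split.
    by rewrite truncn_ge_nat // ler_pdivlMr.
  by rewrite truncn_le_nat // ltr_pdivrMr.
have := truncn_le ((y - t) / dl); rewrite q0 => hl.
have hu := truncnS_gt ((y - t) / dl).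
rewrite ler_pdivlMr // in hl; rewrite ltr_pdivrMr // in hu.
by apply/andP; split; lra.
Qed.

Local Open Scope ereal_scope.

Lemma path_bound : forall H o js r x, (r <= o)%N -> okst mf (js, r) ->
  x <= (t + (o - r)%:R * dl)%R%:E ->
  (forall k, (o - r <= k < o)%N -> w \in E k) ->
  (stp R d T mf E H o (js, r) w = H%:R /\ js != [::]) \/
  G R Dw a x js <= (t + (o%:R + stp R d T mf E H o (js, r) w) * dl)%R%:E.
Proof.
have dl0' := dl0.
have base : forall o r x, (r <= o)%N -> x <= (t + (o - r)%:R * dl)%R%:E ->
    x <= (t + (o%:R + 0) * dl)%R%:E.
  move=> o r x ro xle; rewrite addr0; apply: le_trans xle _.
  rewrite lee_fin lerD2l; apply: ler_wpM2r; [exact: ltW|by rewrite ler_nat leq_subr].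
elim=> [|H IH] o js r x ro ok xle cells.
  case: js ok => [|j js] ok; [right|by left].
  by rewrite /G /=; apply: base xle.
case: js ok => [|j js] ok.
  by right; rewrite /G /=; apply: base xle.
rewrite stpE /=.
have Hn : forall st', stp R d T mf E H o.+1 st' w = H%:R -> (1 + stp R d T mf E H o.+1 st' w)%R = H.+1%:R.
  by move=> st' ->; rewrite mulrS.
case Ew: (w \in E o); rewrite /nxt /=.
- case: ifP => hm.
  + case: x xle => [s| |] xle; last first.
    * by right; rewrite /G /= -/(G R Dw a -oo js) G_Ny leNye.
    * by move: xle; rewrite leye_eq.
    have te : task_end Dw (a j) s <= (t + o.+1%:R * dl)%R%:E.
      apply: le_trans (@task_end_le R Dw (a j) s (t + (o - r)%:R * dl)%R _ _) _.
      * by rewrite -lee_fin.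
      * move=> y Dy /andP[y1 y2].
        have [k /andP[k1 k2] hk] : exists2 k, (o - r <= k <= o)%N & (t + k%:R * dl <= y < t + k.+1%:R * dl)%R.
          apply: cell_of; first by lra.
          have : (a j <= r.+1%:R * dl)%R.
            apply: le_trans (mfa j) _; apply: ler_wpM2r; first exact: ltW.
            by rewrite ler_nat.
          rewrite natrB // in y2; rewrite !mulrSr; lra.
        apply: (hEw k _ y Dy hk).
        move: k2; rewrite leq_eqVlt => /orP[/eqP->//|k2].
        by apply: cells; rewrite k1.
      * have : (a j <= r.+1%:R * dl)%R.
          apply: le_trans (mfa j) _; apply: ler_wpM2r; first exact: ltW.
          by rewrite ler_nat.
        rewrite lee_fin natrB // [(r.+1)%:R]mulrSr [(o.+1)%:R]mulrSr; lra.
    have := IH o.+1 js 0%N (task_end Dw (a j) s) (leq0n _) _ _ _.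
    case.
    * by case: js {ok}; rewrite /okst //= => j' _; exact: mf0.
    * by rewrite subn0.
    * by move=> k; rewrite subn0 => /andP[h1 h2]; exfalso; move: h2; rewrite ltnNge h1.
    * by move=> [h1 h2]; left; split => //; apply: Hn.
    * move=> h; right; rewrite /G /= -/(G R Dw a _ js).
      by apply: le_trans h _; rewrite lee_fin [(o.+1)%:R]mulrSr -addrA.
  + have := IH o.+1 (j :: js) r.+1 x ro _ _ _.
    case.
    * by rewrite /okst /= ltnNge hm.
    * by rewrite subSS.
    * move=> k; rewrite subSS => /andP[k1]; rewrite ltnS leq_eqVlt => /orP[/eqP->//|k2].
      by apply: cells; rewrite k1.
    * by move=> [h1 h2]; left; split => //; apply: Hn.
    * move=> h; right.
      by apply: le_trans h _; rewrite lee_fin [(o.+1)%:R]mulrSr -addrA.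
- have := IH o.+1 (j :: js) 0%N x (leq0n _) _ _ _.
  case.
  * by rewrite /okst /=; exact: mf0.
  * rewrite subn0; apply: le_trans xle _.
    rewrite lee_fin lerD2l; apply: ler_wpM2r; first exact: ltW.
    by rewrite ler_nat (leq_trans (leq_subr _ _)).
  * by move=> k; rewrite subn0 => /andP[h1 h2]; exfalso; move: h2; rewrite ltnNge h1.
  * by move=> [h1 h2]; left; split => //; apply: Hn.
  * move=> h; right.
    by apply: le_trans h _; rewrite lee_fin [(o.+1)%:R]mulrSr -addrA.
Qed.

End PathStp.

Section NHPP.
Variables (R : realType) (d : measure_display) (T : measurableType d).
Variable P : probability T R.
Variable D : T -> set R.
Variable lam : R -> R.
Hypothesis hP : is_NHPP P D lam.
Variables (t dl : R).
Hypothesis t0 : 0 <= t.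
Hypothesis dl0 : 0 < dl.

Definition cellE (k : nat) : set T :=
  [set w | count_eq (D w) (t + k%:R * dl) (t + k.+1%:R * dl) 0].
Definition cellp (k : nat) : R :=
  expR (- cumint lam (t + k%:R * dl) (t + k.+1%:R * dl)).

Lemma cellE_empty w k : w \in cellE k -> forall y, D w y ->
  ~ (t + k%:R * dl <= y < t + k.+1%:R * dl).
Proof.
rewrite inE => -[s [_ s0 hs]] y Dy hy.
have := (hs y).2 (conj Dy hy).
by case: s s0 {hs}.
Qed.

Lemma cell_hE (S : seq nat) : uniq S ->
  measurable (@Cyl d T cellE S) /\ P (@Cyl d T cellE S) = (\prod_(k <- S) cellp k)%:E.
Proof.
move=> uS; have dl0' := dl0; have t0' := t0.
have := hP.2 (size S) (fun j => t + (nth 0%N S j)%:R * dl)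
   (fun j => t + (nth 0%N S j).+1%:R * dl) (fun _ => 0%N).
case.
- move=> j; apply/andP; split.
    by apply: addr_ge0 => //; apply: mulr_ge0 => //; exact: ltW.
  by rewrite lerD2l ler_pM2r // ler_nat.
- move=> j l jl.
  have : nth 0%N S j != nth 0%N S l by rewrite nth_uniq.
  rewrite neq_ltn => /orP[h|h]; [left|right];
    by rewrite lerD2l ler_pM2r // ler_nat.
move=> mE PE.
have CE : @Cyl d T cellE S = \bigcap_(j in [set: 'I_(size S)])
    [set w | count_eq (D w) (t + (nth 0%N S j)%:R * dl) (t + (nth 0%N S j).+1%:R * dl) 0].
  apply/seteqP; split => w /=.
    by move=> h j _; apply: h; rewrite mem_nth.
  move=> h k kS; have := h (@Ordinal _ (index k S) (etrans (index_mem k S) kS)) I.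
  by rewrite /= nth_index.
rewrite CE; split => //; rewrite PE; congr EFin.
rewrite (big_nth 0%N) big_mkord; apply: eq_bigr => j _.
by rewrite /pois_pmf /cellp expr0 mulr1 fact0 divr1.
Qed.

End NHPP.

Section IntMono.
Local Open Scope ereal_scope.
Variables (d : measure_display) (T : measurableType d) (R : realType).
Variable mu : {measure set T -> \bar R}.

Lemma le_integral_nm (D : set T) (f g : T -> \bar R) :
  (forall x, D x -> 0 <= f x) -> (forall x, D x -> f x <= g x) ->
  \int[mu]_(x in D) f x <= \int[mu]_(x in D) g x.
Proof.
move=> f0 fg.
rewrite !ge0_integralE //; last by move=> x Dx; apply: le_trans (f0 _ Dx) (fg _ Dx).
apply: ereal_sup_le => _ [h hf <-]; exists h => //= x.
apply: le_trans (hf x) _; rewrite /patch; case: ifP => // /set_mem; exact: fg.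
Qed.
End IntMono.

Lemma cumint_bnd (R : realType) (lam : R -> R) (a b L : R) : 0 <= a -> a < b ->
  (forall x, a <= x <= b -> 0 <= lam x <= L) ->
  0 <= cumint lam a b <= L * (b - a).
Proof.
move=> a0 ab hl; rewrite /cumint /Rintegral.
have h0 : (0 <= \int[lebesgue_measure]_(x in `[a, b]) (lam x)%:E)%E.
  apply: integral_ge0 => x; rewrite /= in_itv /= => /hl /andP[+ _].
  by rewrite lee_fin.
have h1 : (\int[lebesgue_measure]_(x in `[a, b]) (lam x)%:E <= (L * (b - a))%:E)%E.
  apply: le_trans (@le_integral_nm _ _ _ lebesgue_measure _ _ (fun=> L%:E) _ _) _.
  - by move=> x; rewrite /= in_itv /= => /hl /andP[+ _]; rewrite lee_fin.
  - by move=> x; rewrite /= in_itv /= => /hl /andP[_ +]; rewrite lee_fin.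
  rewrite integral_cst //=.
  by rewrite lebesgue_measure_itv /= lte_fin ab -EFinM.
move: h0 h1; case: (\int[_]_(_ in _) _)%E => [r| |] //=.
by rewrite !lee_fin => -> ->.
Qed.
Lemma poly_ineq (R : realType) (x y : R) : 0 < x -> x <= 1/2 -> 0 <= y -> y <= x^+2/32 ->
  (1 + y) * (1 - (1 - x/4)^+4 * (1 - y)) <= (x + x^+2) * (1 - x/4)^+4 * (1 - y).
Proof.
move=> x0 x1 y0 y1.
set p := (1 - x/4)^+4.
have p0 : 0 <= p by rewrite /p; apply: exprn_ge0; lra.
have p1 : p <= 1 by rewrite /p; apply: exprn_ile1; lra.
set g := 3/8 - 11/16 * x + 81/256 * x^+2 - 15/256 * x^+3 + 1/256 * x^+4.
have hp : p * (1 + x + x^+2) - 1 = x^+2 * g by rewrite /p /g; field.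
have hg : 1/10 <= g.
  rewrite /g.
  have h2 : x^+2 <= 1/4 by rewrite expr2; nra.
  have h2' : 0 <= x^+2 by apply: exprn_ge0; lra.
  have h3 : x^+3 <= 1/4 * x by rewrite exprS; have := ler_wpM2l (ltW x0) h2; lra.
  have h4 : 0 <= x^+4 by apply: exprn_ge0; lra.
  have h5 : 719/1024 * x - 81/256 * x^+2 <= 719/2048 - 81/1024.
    have ha : 0 <= 1/2 - x by lra.
    have hb : 0 <= 719/1024 - 81/256 * (x + 1/2) by lra.
    have := mulr_ge0 ha hb.
    rewrite expr2; nra.
  lra.
have h2' : 0 <= x^+2 by apply: exprn_ge0; lra.
have h2 : x^+2 <= 1/4 by rewrite expr2; nra.
have yy : y <= 1/128 by lra.
have f1 : x^+2 * (1/10) <= x^+2 * g by apply: ler_wpM2l.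
have f2 : p * y^+2 <= y / 128.
  rewrite expr2; have : p * y <= 1 * (1/128) by apply: ler_pM => //; lra.
  move=> h; have := ler_wpM2r y0 h; lra.
have f3 : (x + x^+2) * p * y <= 3/4 * y.
  apply: ler_wpM2r => //; have : x + x^+2 <= 3/4 by lra.
  move=> h; have hx : 0 <= x + x^+2 by lra.
  by have := ler_pM hx p0 h p1; lra.
rewrite -subr_ge0.
have -> : (x + x^+2) * p * (1 - y) - (1 + y) * (1 - p * (1 - y)) =
   x^+2 * g - y - p * y^+2 - (x + x^+2) * p * y by rewrite -hp; ring.
lra.
Qed.

Lemma expR_le_inv (R : realType) (y : R) : y < 1 -> expR y <= 1 / (1 - y).
Proof.
move=> y1; have h := expR_ge1Dx (- y).
have -> : expR y = (expR (- y))^-1 by rewrite expRN invrK.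
rewrite div1r lef_pV2 ?posrE ?expR_gt0 ?subr_gt0 //; lra.
Qed.

Lemma task_bound (R : realType) (lam dl c : R) (m : nat) : 0 < lam -> 0 < dl -> 0 < c ->
  m%:R * dl <= c + dl -> lam * c <= 1/2 -> lam * dl <= (lam * c)^+2 / 32 ->
  dl * gf R (expR (lam * dl)) m 0 <= c + lam * c^+2.
Proof.
move=> l0 d0 c0 mdl xc yx.
set y := lam * dl in yx *; set x := lam * c in xc yx.
have y0 : 0 < y by apply: mulr_gt0.
have x0 : 0 < x by apply: mulr_gt0.
have u1 : 1 + y <= expR y := expR_ge1Dx y.
have y1 : y <= 1/128.
  have : x^+2 <= 1/4 by rewrite expr2; nra.
  lra.
set u := expR y in u1 *.
have U1 : 1 <= u ^+ m by apply: exprn_ege1; lra.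
have Ule : u ^+ m <= 1 / ((1 - x/4)^+4 * (1 - y)).
  rewrite /u -expRM_natl.
  apply: (@le_trans _ _ (expR (x + y))).
    rewrite ler_expR /x /y mulrA (mulrC _ lam) -mulrA -mulrDr.
    by apply: ler_wpM2l => //; exact: ltW.
  rewrite expRD.
  have hx : expR x <= (1 / (1 - x/4))^+4.
    have -> : expR x = expR (x / 4) ^+ 4 by rewrite -expRM_natl; congr expR; field.
    apply: lerXn2r; [exact: ltW (expR_gt0 _)| |]. 
      by apply: divr_ge0; lra.
    by apply: expR_le_inv; lra.
  have hy := @expR_le_inv _ y ltac:(lra).
  apply: le_trans (ler_pM _ _ hx hy) _.
  - exact: ltW (expR_gt0 _).
  - exact: ltW (expR_gt0 _).
  rewrite expr_div_n expr1n.
  have q0 : 0 < (1 - x/4)^+4 by apply: exprn_gt0; lra.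
  by rewrite mulf_div mulr1.
set U := u ^+ m in U1 Ule *.
rewrite /gf expr0.
have uy : y <= u - 1 by lra.
have hq0 : 0 < (1 - x/4)^+4 by apply: exprn_gt0; lra.
have hB : (1 + y) * (1 / ((1 - x/4)^+4 * (1 - y)) - 1) <= x + x^+2.
  have hpol := @poly_ineq R x y x0 xc (ltW y0) yx.
  have y1' : 0 < 1 - y by lra.
  rewrite -subr_ge0.
  have -> : x + x ^+ 2 - (1 + y) * (1 / ((1 - x / 4) ^+ 4 * (1 - y)) - 1) =
     ((x + x^+2) * (1 - x/4)^+4 * (1 - y) - (1 + y) * (1 - (1 - x/4)^+4 * (1 - y)))
      / ((1 - x/4)^+4 * (1 - y)).
    by field; apply/andP; split; apply/eqP; lra.
  by apply: divr_ge0; [rewrite subr_ge0|apply: mulr_ge0; apply: ltW].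
have um : 0 < u - 1 by lra.
have -> : dl * (u * (u ^+ m - 1) / (u - 1)) = (dl * (u / (u - 1))) * (u ^+ m - 1).
  by field; rewrite gt_eqF.
have h1 : u / (u - 1) <= (1 + y) / y.
  rewrite ler_pdivrMr // mulrAC ler_pdivlMr //; nra.
have h2 : dl * (u / (u - 1)) <= (1 + y) / lam.
  apply: le_trans (ler_wpM2l (ltW d0) h1) _.
  by rewrite /y le_eqVlt; apply/orP; left; apply/eqP; field; rewrite !gt_eqF.
apply: le_trans (ler_pM _ _ h2 (lerB Ule (lexx 1))) _.
- by apply: mulr_ge0; [exact: ltW|apply: divr_ge0; lra].
- by rewrite subr_ge0.
have -> : c + lam * c^+2 = (x + x^+2) / lam by rewrite /x; field; rewrite gt_eqF.
rewrite mulrAC ler_pM2r ?invr_gt0 //.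
Qed.

Lemma a_bounds (R : realType) (n : nat) (a : nat -> R) :
  0 < a 1%N -> (forall j, (1 <= j < n)%N -> a j < a j.+1) ->
  forall j, (1 <= j <= n)%N -> a 1%N <= a j <= a n.
Proof.
move=> a1 ainc.
have up : forall j k, (1 <= j)%N -> (j <= k <= n)%N -> a j <= a k.
  move=> j k j1; elim: k => [|k IH]; first by rewrite leqn0 => /andP[/eqP -> _]; move: j1; rewrite leqNgt.
  move=> /andP[]; rewrite leq_eqVlt => /orP[/eqP <- //|jk kn].
  apply: le_trans (IH _) (ltW (ainc _ _)).
    by rewrite -ltnS jk ltnW.
  by rewrite (leq_trans j1) // -ltnS jk.
move=> j /andP[j1 jn]; apply/andP; split.
  by apply: up => //; rewrite j1.
by apply: up => //; rewrite jn leqnn.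
Qed.

Theorem lemma4 (R : realType) (d : measure_display) (T : measurableType d)
    (P : probability T R) (D : T -> set R)
    (n : nat) (a : nat -> R) (lbar : R) (f : R -> R) :
  0 < a 1%N ->
  (forall j, (1 <= j < n)%N -> a j < a j.+1) ->
  0 < lbar ->
  (forall t, 0 < t -> derivable f t 1) ->
  f x @[x --> 0^'+] --> f 0 ->
  (forall t, 0 <= t -> 0 < f t) ->
  0 < inf (f @` `[0, +oo[%classic) ->
  has_ubound (f @` `[0, +oo[%classic) ->
  lbar <= 1 / (2 * sup (f @` `[0, +oo[%classic) * a n) ->
  is_NHPP P D (fun t => lbar * f t) ->
  forall (t : R) (i : nat), 0 <= t -> (1 <= i <= n)%N ->
    let A := \sum_(i <= j < n.+1) a j in
    [/\ (A%:E <= Mexp P D a i n t)%E,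
        (Mexp P D a i n t <=
          (A + lbar * sup (f @` `[0, +oo[%classic)
                 * \sum_(i <= j < n.+1) a j ^+ 2)%:E)%E &
        (Mexp P D a i n t <= (3 / 2 * A)%:E)%E].
Proof.
move=> a1 ainc lb0 _ _ fpos _ fub lbnd hP t i t0 hi A.
set S := sup (f @` `[0, +oo[%classic) in lbnd *.
have ab := @a_bounds R n a a1 ainc.
have fS : forall x, 0 <= x -> f x <= S.
  move=> x x0; apply: sup_upper_bound; first split.
  - by exists (f 0); exists 0 => //=; rewrite in_itv /= lexx.
  - exact: fub.
  - by exists x => //=; rewrite in_itv /= x0.
have S0 : 0 < S by apply: lt_le_trans (fpos 0 (lexx 0)) (fS 0 (lexx 0)).
have an0 : 0 < a n by have := ab n; rewrite (leq_trans _ (andP hi).2) ?(andP hi).1 //= leqnn => /(_ isT) /andP[h _]; apply: lt_le_trans h.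
set lamp := lbar * S.
have lamp0 : 0 < lamp by apply: mulr_gt0.
have lan : lamp * a n <= 1/2.
  move: lbnd; rewrite ler_pdivlMr ?mulr_gt0 // /lamp; lra.
set L := iota i (n.+1 - i).
have hL : forall j, j \in L -> (1 <= j <= n)%N.
  move=> j; rewrite mem_iota subnKC; last by apply: leq_trans (andP hi).2 _.
  by rewrite ltnS => /andP[ij jn]; rewrite jn (leq_trans (andP hi).1 ij).
have hA : A = \sum_(j <- L) a j by [].
have aj0 : forall j, j \in L -> 0 < a j.
  by move=> j /hL /ab /andP[h _]; apply: lt_le_trans h.
set dl := lamp * a 1%N ^+ 2 / 32.
have dl0 : 0 < dl by apply: divr_gt0 => //; apply: mulr_gt0 => //; apply: exprn_gt0.
pose mf := fun j => (Num.truncn (a j / dl)).+1.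
have mf0 : forall j, (0 < mf j)%N by [].
have mfa : forall j, a j <= (mf j)%:R * dl.
  by move=> j; apply: ltW; rewrite -ltr_pdivrMr //; exact: truncnS_gt.
have mfu : forall j, j \in L -> (mf j)%:R * dl <= a j + dl.
  move=> j jL; rewrite /mf mulrSr mulrDl mul1r lerD2r -ler_pdivlMr //.
  by rewrite truncn_le; apply: divr_ge0; [exact: ltW (aj0 _ jL)|exact: ltW].
pose lam := fun x => lbar * f x.
pose E := cellE R d T D t dl.
pose e := cellp R lam t dl.
have hE := @cell_hE R d T P D lam hP t dl t0 dl0.
set u := expR (lamp * dl).
have u1 : 1 < u by rewrite /u expR_gt1; apply: mulr_gt0.
have he : forall k, 1 / u <= e k <= 1.
  move=> k.
  have tk0 : 0 <= t + k%:R * dl by apply: addr_ge0 => //; apply: mulr_ge0 => //; exact: ltW.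
  have : 0 <= cumint lam (t + k%:R * dl) (t + k.+1%:R * dl) <= lamp * (t + k.+1%:R * dl - (t + k%:R * dl)).
  apply: cumint_bnd => //.
  - by rewrite ltrD2l ltr_pM2r // ltr_nat.
  - move=> x /andP[x1 _]; have x0 : 0 <= x by apply: le_trans x1.
    apply/andP; split; first by apply: mulr_ge0; [exact: ltW|exact: ltW (fpos _ x0)].
    by rewrite /lam /lamp; apply: ler_wpM2l; [exact: ltW|exact: fS].
  rewrite -/(cellp R lam t dl k) /cellp.
  move=> /andP[c0 c1]; rewrite /e /cellp; apply/andP; split.
    rewrite /u div1r -expRN ler_expR lerN2.
    apply: le_trans c1 _; rewrite le_eqVlt; apply/orP; left; apply/eqP.
    by rewrite mulrSr; ring.
  by rewrite -[X in _ <= X]expR0 ler_expR oppr_le0.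
have Li : L = i :: iota i.+1 (n - i).
  by rewrite /L subSn ?(andP hi).2.
pose st0 := (L, 0%N).
have ok0 : okst mf st0 by rewrite /st0 /okst Li.
set B := A + lamp * \sum_(i <= j < n.+1) a j ^+ 2.
have PhiB : dl * Phi R mf u st0 <= B.
  have -> : Phi R mf u st0 = \sum_(j <- L) gf R u (mf j) 0.
    by rewrite /Phi /st0 /= Li big_cons.
  rewrite /B hA.
  have -> : lamp * \sum_(i <= j < n.+1) a j ^+ 2 = \sum_(j <- L) lamp * a j ^+ 2.
    by rewrite mulr_sumr.
  rewrite -big_split /= mulr_sumr big_seq [X in _ <= X]big_seq; apply: ler_sum => j jL.
  apply: task_bound => //.
  - exact: aj0.
  - exact: mfu.
  - apply: le_trans lan; apply: ler_wpM2l; first exact: ltW.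
    by have /ab/andP[] := hL _ jL.
  - have /ab/andP[h1 _] := hL _ jL.
    have h2 : lamp * a 1%N <= lamp * a j by apply: ler_wpM2l => //; exact: ltW.
    have h3 : 0 < lamp * a 1%N by apply: mulr_gt0.
    have -> : lamp * dl = (lamp * a 1%N) ^+ 2 / 32 by rewrite /dl; field.
    rewrite ler_pM2r ?invr_gt0 // !expr2; nra.
pose g := fun (H : nat) (w : T) => (dl * stp R d T mf E H 0 st0 w)%:E.
have mg : forall H, measurable_fun setT (g H).
  move=> H; apply/measurable_EFinP; apply: measurable_funM; first exact: measurable_cst.
  exact: (@stp_meas R d T P mf E e hE H 0%N st0).
have g0 : forall H w, (0 <= g H w)%E.
  by move=> H w; rewrite lee_fin mulr_ge0 //; [exact: ltW|exact: stp_ge0].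
have gnd : forall w, {homo g ^~ w : m n / (m <= n)%N >-> (m <= n)%E}.
  move=> w m k; elim: k => [|k IH]; first by rewrite leqn0 => /eqP->.
  rewrite leq_eqVlt => /orP[/eqP->//|]; rewrite ltnS => /IH h.
  apply: le_trans h _; rewrite lee_fin ler_wpM2l //; [exact: ltW|exact: stp_nd].
have intg : forall H, (\int[P]_w g H w <= B%:E)%E.
  move=> H; rewrite /g.
  under eq_integral do rewrite EFinM.
  rewrite ge0_integralZl_EFin //; first last.
  - exact: ltW.
  - by apply/measurable_EFinP; exact: (@stp_meas R d T P mf E e hE H 0%N st0).
  - by move=> w _; rewrite lee_fin stp_ge0.
  have CT : Cyl d T E [::] = setT by apply/seteqP; split => w //= _ k; rewrite in_nil.
  rewrite -CT (@int_stp R d T P mf E e hE H 0%N st0 [::]) // big_nil mul1r -EFinM lee_fin.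
  apply: le_trans PhiB; apply: ler_wpM2l; first exact: ltW.
  exact: (@Vf_le_Phi R mf mf0 u u1 e he H 0%N st0 ok0).
have seqE : forall w, seq_end (D w) a i n t = G R (D w) a t%:E L by [].
have lowb : forall w, (A%:E <= seq_end (D w) a i n t - t%:E)%E.
  move=> w; rewrite seqE.
  have := @G_ge R (D w) a L t t%:E (lexx _).
  case: (G R (D w) a t%:E L) => [r| |] //=.
    by rewrite lee_fin -EFinB lee_fin hA; lra.
  by move=> _; exact: leey.
have A0 : 0 <= A by rewrite hA big_seq; apply: sumr_ge0 => j /aj0 /ltW.
have upb : forall w, (seq_end (D w) a i n t - t%:E <= limn (g ^~ w))%E.
  move=> w.
  have ZE : limn (g ^~ w) = ereal_sup (range (g ^~ w)).
    by apply/cvg_lim => //; apply: ereal_nondecreasing_cvgn; exact: gnd.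
  have gZ : forall H, (g H w <= limn (g ^~ w))%E.
    by move=> H; rewrite ZE; apply: ereal_sup_ubound; exists H.
  have hEw : forall k, w \in E k -> forall y, D w y -> ~ (t + k%:R * dl <= y < t + k.+1%:R * dl).
    exact: cellE_empty.
  have hp := fun H => @path_bound R d T mf E a t dl w (D w) dl0 mf0 mfa hEw H 0%N L 0%N t%:E (leqnn 0) ok0.
  have [[H0 hH]|nH] := pselect (exists H,
     (G R (D w) a t%:E L <= (t + (0%:R + stp R d T mf E H 0 (L, 0%N) w) * dl)%:E)%E).
    apply: le_trans (gZ H0); rewrite seqE /g.
    move: hH; case: (G R (D w) a t%:E L) => [r| |] //=.
    - by rewrite !lee_fin add0r; lra.
    - by move=> _; exact: leNye.
  have Hall : forall H, stp R d T mf E H 0 (L, 0%N) w = H%:R.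
    move=> H; case: (hp H) => //.
    - by rewrite subnn mul0r addr0.
    - by case.
    - by move=> h; exfalso; apply: nH; exists H.
  suff -> : limn (g ^~ w) = +oo%E by rewrite leey.
  move: (gZ 0%N) (gZ (Num.truncn (1 + (fine (limn (g ^~ w))) / dl)).+1).
  case: (limn (g ^~ w)) => [r| |] //= _.
  rewrite /g Hall lee_fin => h; exfalso.
  have := truncnS_gt (1 + r / dl).
  move: h; set N := _.+1%:R => h.
  have : N <= r / dl by rewrite ler_pdivlMr // mulrC.
  lra.
have MU : (Mexp P D a i n t <= B%:E)%E.
  rewrite /Mexp.
  have h1 : (\int[P]_w (seq_end (D w) a i n t - t%:E) <= \int[P]_w limn (g ^~ w))%E.
    apply: le_integral_nm.
    - by move=> w _; apply: le_trans (lowb w); rewrite lee_fin.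
    - by move=> w _; exact: upb.
  apply: le_trans h1 _.
  rewrite (@monotone_convergence _ _ _ P setT measurableT g) //.
  - apply: lime_le.
      apply: ereal_nondecreasing_is_cvgn => m k mk.
      apply: le_integral_nm => w _; [exact: g0|exact: gnd].
    by apply: nearW => H; exact: intg.
have ML : (A%:E <= Mexp P D a i n t)%E.
  rewrite /Mexp.
  have h1 : (\int[P]_w (cst A%:E) w <= \int[P]_w (seq_end (D w) a i n t - t%:E))%E.
    apply: le_integral_nm.
    - by move=> w _; rewrite lee_fin.
    - by move=> w _; exact: lowb.
  apply: le_trans h1.
  rewrite integral_cst //; set m := (X in (_ * X)%E).
  have -> : m = 1%E by rewrite /m; exact: probability_setT.
  by rewrite mule1.
have BA : B <= 3 / 2 * A.
  have : \sum_(i <= j < n.+1) a j ^+ 2 <= a n * A.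
    rewrite hA mulr_sumr -/(index_iota i n.+1) -/L big_seq [X in _ <= X]big_seq.
    apply: ler_sum => j jL; rewrite expr2 ler_wpM2r //; first exact: ltW (aj0 _ jL).
    by have /ab/andP[] := hL _ jL.
  move=> h; rewrite /B.
  have : lamp * \sum_(i <= j < n.+1) a j ^+ 2 <= lamp * (a n * A) by apply: ler_wpM2l => //; exact: ltW.
  have : lamp * (a n * A) <= 1/2 * A by rewrite mulrA; apply: ler_wpM2r.
  lra.
split => //.
by apply: le_trans MU _; rewrite lee_fin.
Qed.
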